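(* Let $q$ be an odd prime power, $f$ a planar function on $\mathbb F_{q^2}$, and $\theta\in\mathbb F_{q^2}^*$ such that for every $c\in\mathbb F_q$, $\#\{x\in\mathbb F_{q^2}:\phi(x)=c\}$ equals $q+1$ if $c\neq0$ and $1$ if $c=0$, where $\phi(x):=\theta_1f_0(x)-\theta_0f_1(x)$. Let $\mathscr C_\theta:=\{C_{a,\beta}:a\in\mathbb F_{q^2},\beta\in\mathbb F_q^*\}$ with $C_{a,\beta}:=\{x\in\mathbb F_{q^2}:\phi(x+a)=\beta\}$. Then $(\mathbb F_{q^2},\mathscr C_\theta)$ is a $(q^2,q+1,q)$-design, i.e.\ every element of $\mathscr C_\theta$ has $q+1$ elements and any two distinct elements of $\mathbb F_{q^2}$ lie in exactly $q$ members of $\mathscr C_\theta$.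
   Context: A function $f:\mathbb F_{q^2}\to\mathbb F_{q^2}$ is planar if for every $a\neq0$ the map $x\mapsto f(x+a)-f(x)$ is a bijection. A fixed $\xi\in\mathbb F_{q^2}\setminus\mathbb F_q$ is chosen; $\theta=\theta_0+\theta_1\xi$ and $f(x)=f_0(x)+f_1(x)\xi$ with $\theta_i\in\mathbb F_q$, $f_i(x)\in\mathbb F_q$. *)

(* Defs.v *)
From HB Require Import structures.
From mathcomp Require Import all_boot all_order all_algebra all_field.
Set Implicit Arguments. Unset Strict Implicit. Unset Printing Implicit Defensive.
Import GRing.Theory.
Local Open Scope ring_scope.

Definition planar (K : finFieldType) (f : K -> K) : Prop :=
  forall a : K, a != 0 -> bijective (fun x => f (x + a) - f x).

Definition phi_of (F K : finFieldType) (f0 f1 : K -> F) (t0 t1 : F) (x : K) : F :=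
  t1 * f0 x - t0 * f1 x.

Definition block (F K : finFieldType) (phi : K -> F) (a : K) (b : F) : {set K} :=
  [set x | phi (x + a) == b].

Definition blocks (F K : finFieldType) (phi : K -> F) : {set {set K}} :=
  [set block phi ab.1 ab.2 | ab in [set ab : K * F | ab.2 != 0]].

Definition is_design (K : finType) (B : {set {set K}}) (v k lam : nat) : Prop :=
  [/\ #|K| = v,
      (forall C, C \in B -> #|C| = k) &
      (forall x y : K, x != y -> #|[set C in B | (x \in C) && (y \in C)]| = lam)].

(* Main.v *)
Require Import Defs.
From HB Require Import structures.
From mathcomp Require Import all_boot all_order all_algebra all_field.
From mathcomp Require Import ring.
Import GRing.Theory.
Local Open Scope ring_scope.

Lemma lin_count (F : finFieldType) (t0 t1 c : F) :
  (t0 != 0) || (t1 != 0) ->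
  #|[set u : F * F | t1 * u.1 - t0 * u.2 == c]| = #|F|.
Proof.
case/orP => ht.
- have -> : [set u : F * F | t1 * u.1 - t0 * u.2 == c] =
     (fun v => (v, (t1 * v - c) / t0)) @: [set: F].
    apply/setP => u; rewrite inE; apply/eqP/imsetP.
    + move=> <-; exists u.1; first by rewrite inE.
      case: u => a b /=; congr (_, _); by field.
    + by case=> v _ -> /=; field.
  by rewrite card_imset ?cardsT // => a b [].
- have -> : [set u : F * F | t1 * u.1 - t0 * u.2 == c] =
     (fun v => ((c + t0 * v) / t1, v)) @: [set: F].
    apply/setP => u; rewrite inE; apply/eqP/imsetP.
    + move=> <-; exists u.2; first by rewrite inE.
      case: u => a b /=; congr (_, _); by field.
    + by case=> v _ -> /=; field.
  by rewrite card_imset ?cardsT // => a b [].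
Qed.

Theorem corollary3p6 (q : nat) (F K : finFieldType) (iota : {rmorphism F -> K})
  (hqF : #|F| = q) (hqodd : odd q) (hqK : #|K| = (q ^ 2)%N)
  (xi : K) (hxi : forall c : F, xi != iota c)
  (f : K -> K) (f0 f1 : K -> F)
  (hf : forall x, f x = iota (f0 x) + iota (f1 x) * xi)
  (hplanar : planar f)
  (theta : K) (theta0 theta1 : F)
  (htheta : theta = iota theta0 + iota theta1 * xi) (htheta0 : theta != 0)
  (hcount : forall c : F,
     #|[set x : K | phi_of f0 f1 theta0 theta1 x == c]| =
       (if c != 0 then q.+1 else 1%N)) :
  is_design (blocks (phi_of f0 f1 theta0 theta1)) (q ^ 2) q.+1 q.
Proof.
set phi := phi_of f0 f1 theta0 theta1.
have hth : (theta0 != 0) || (theta1 != 0).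
  case: (eqVneq theta0 0) => [h0|//]; case: (eqVneq theta1 0) => [h1|//].
  by move: htheta0; rewrite htheta h0 h1 !rmorph0 mul0r addr0 eqxx.
have key : forall (d : K) (c : F), d != 0 ->
    #|[set z : K | phi (z + d) - phi z == c]| = q.
  move=> d c hd.
  pose h z := (f0 (z + d) - f0 z, f1 (z + d) - f1 z).
  have hinj : injective h.
    move=> z z' [e0 e1].
    case: (hplanar d hd) => g gK _; rewrite -[z]gK -[z']gK; congr g.
    rewrite !hf.
    rewrite opprD addrACA -!rmorphB e0 -mulrBl -rmorphB e1.
    by rewrite opprD addrACA -!rmorphB -mulrBl -rmorphB.
  have hbij : bijective h.
    by apply: inj_card_bij => //; rewrite card_prod hqF hqK.
  case: hbij => hi hK hiK.
  rewrite -hqF -(@lin_count _ theta0 theta1 c hth).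
  have -> : [set z : K | phi (z + d) - phi z == c] =
            [set z | h z \in [set u : F * F | theta1 * u.1 - theta0 * u.2 == c]].
    apply/setP => z; rewrite !inE /h /phi /phi_of /=.
    suff -> : theta1 * f0 (z + d) - theta0 * f1 (z + d) - (theta1 * f0 z - theta0 * f1 z) =
       theta1 * (f0 (z + d) - f0 z) - theta0 * (f1 (z + d) - f1 z) by [].
    by ring.
  set A := [set u : F * F | _].
  rewrite -(card_imset _ hinj); apply: eq_card => u.
  apply/imsetP/idP.
  - by case=> z; rewrite inE => zA ->.
  - by move=> uA; exists (hi u); rewrite ?hiK // in_set hiK.
have lev0 : forall z z', phi z = 0 -> phi z' = 0 -> z = z'.
  move=> z z' hz hz'.
  have := hcount 0; rewrite eqxx /= => /eqP/cards1P [w hw].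
  have : z \in [set x | phi_of f0 f1 theta0 theta1 x == 0] by rewrite inE; apply/eqP.
  have : z' \in [set x | phi_of f0 f1 theta0 theta1 x == 0] by rewrite inE; apply/eqP.
  by rewrite hw !inE => /eqP -> /eqP ->.
have lev : forall b, b != 0 -> #|[set z | phi z == b]| = q.+1.
  by move=> b hb; rewrite /phi hcount hb.
have injB : forall a a' b b', b != 0 -> b' != 0 ->
    block phi a b = block phi a' b' -> a = a' /\ b = b'.
  move=> a a' b b' hb hb' eB.
  case: (eqVneq a a') => [ea|ne].
    split => //; subst a'.
    have : (0 < #|[set z | phi z == b]|)%N by rewrite lev.
    case/card_gt0P => z; rewrite inE => /eqP hz.
    have : z - a \in block phi a b by rewrite inE subrK hz.
    by rewrite eB inE subrK hz => /eqP.
  exfalso.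
  have hd : a' - a != 0 by rewrite subr_eq0 eq_sym.
  have : [set z | phi z == b] \subset [set z | phi (z + (a' - a)) - phi z == b' - b].
    apply/subsetP => z; rewrite !inE => /eqP hz.
    have : z - a \in block phi a b by rewrite inE subrK hz.
    rewrite eB inE => /eqP hz'.
    have -> : z + (a' - a) = z - a + a' by rewrite addrA addrAC.
    by rewrite hz' hz.
  move/subset_leq_card; rewrite lev // key //.
  by rewrite ltnn.
split => //.
- move=> C /imsetP [[a b]]; rewrite inE /= => hb ->.
  have -> : block phi a b = (fun x => x + a) @^-1: [set z | phi z == b].
    by apply/setP => x; rewrite !inE.
  by rewrite card_preimset ?lev // => u v /addIr.
move=> x y hxy.
set d := y - x.
have hd : d != 0 by rewrite subr_eq0 eq_sym.
set Z := [set z | phi (z + d) - phi z == 0].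
have Znz : forall z, z \in Z -> phi z != 0.
  move=> z; rewrite inE subr_eq0 => /eqP e; apply/eqP => h0.
  have e2 := lev0 _ _ (etrans e h0) h0.
  move/eqP: hd; apply.
  have : z + d - z = 0 by rewrite e2 subrr.
  by rewrite addrAC subrr add0r.
have -> : [set C in blocks phi | (x \in C) && (y \in C)] =
    (fun z => block phi (z - x) (phi z)) @: Z.
  apply/setP => C; rewrite inE; apply/andP/imsetP.
  - case=> /imsetP [[a b]]; rewrite inE /= => hb -> /andP [].
    rewrite !inE => /eqP hx /eqP hy.
    exists (x + a).
      rewrite inE; apply/eqP; rewrite -(subrr b); congr (_ - _).
        by rewrite -hy; congr phi; rewrite /d; ring.
      exact: hx.
    by congr (block phi _ _); [ring | rewrite hx].
  - case=> z zZ ->; split.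
      apply/imsetP; exists (z - x, phi z); rewrite // inE /=; exact: Znz.
    move: zZ; rewrite !inE subr_eq0 => /eqP e.
    rewrite addrC subrK eqxx /=.
    have -> : y + (z - x) = z + d by rewrite /d; ring.
    by rewrite e.
rewrite card_in_imset ?key //.
move=> z z' zZ z'Z /injB [] //; try exact: Znz.
by move/(congr1 (fun t => t + x)); rewrite !subrK.
Qed.
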